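(* Let $a,b,c>0$ and set $M=\mathrm{e}^{B_2}\mathrm{e}^{B_1}$ with $B_1=\begin{bmatrix}-a&-b\\ c&0\end{bmatrix}$, $B_2=\begin{bmatrix}-a&b\\ -c&0\end{bmatrix}$. Write the characteristic polynomial of $M$ as $\lambda^2+\alpha\lambda+\beta$. Then $\beta=\mathrm{e}^{-2a}$ and, with $d=\sqrt{a^2-4bc}$ (a real or purely imaginary number) and provided $d\neq 0$, $$\alpha=-\frac{\mathrm{e}^{-a}\left(a^2\mathrm{e}^{d}+a^2\mathrm{e}^{-d}+2d^2-2a^2\right)}{d^2}.$$ Moreover, both eigenvalues of $M$ have modulus strictly less than $1$.
   Context: This applies to the flying capacitor model with $a=\frac{TR}{2L}$, $b=\frac{T}{2L}$, $c=\frac{T}{2C}$, in which case $M=\mathrm{e}^{\frac T2A_2}\mathrm{e}^{\frac T2A_1}$ for $A_1=\begin{bmatrix}-\frac RL & -\frac1L\\ \frac1C & 0\end{bmatrix}$, $A_2=\begin{bmatrix}-\frac RL & \frac1L\\ -\frac1C & 0\end{bmatrix}$. $\mathrm{e}^{B}$ denotes the matrix exponential. *)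

(* Defs.v *)
From Stdlib Require Import Reals Factorial.
Open Scope R_scope.

Record Mat2 := mk2 { e11 : R; e12 : R; e21 : R; e22 : R }.
Definition mI : Mat2 := mk2 1 0 0 1.
Definition mmul (A B : Mat2) : Mat2 :=
  mk2 (e11 A * e11 B + e12 A * e21 B) (e11 A * e12 B + e12 A * e22 B)
      (e21 A * e11 B + e22 A * e21 B) (e21 A * e12 B + e22 A * e22 B).
Fixpoint mpow (B : Mat2) (n : nat) : Mat2 :=
  match n with O => mI | S k => mmul B (mpow B k) end.

Definition exp_partial (f : Mat2 -> R) (B : Mat2) (n : nat) : R :=
  sum_f_R0 (fun k => f (mpow B k) / INR (fact k)) n.

Definition is_mexp (B E : Mat2) : Prop :=
  Un_cv (exp_partial e11 B) (e11 E) /\ Un_cv (exp_partial e12 B) (e12 E) /\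
  Un_cv (exp_partial e21 B) (e21 E) /\ Un_cv (exp_partial e22 B) (e22 E).

Definition det2 (M : Mat2) : R := e11 M * e22 M - e12 M * e21 M.
Definition charpoly (M : Mat2) (l : R) : R :=
  det2 (mk2 (l - e11 M) (- e12 M) (- e21 M) (l - e22 M)).

(* minimal complex numbers as pairs (re, im) *)
Definition Cplx : Type := (R * R)%type.
Definition RtoC (r : R) : Cplx := (r, 0).
Definition Cadd (z w : Cplx) : Cplx := (fst z + fst w, snd z + snd w).
Definition Copp (z : Cplx) : Cplx := (- fst z, - snd z).
Definition Csub (z w : Cplx) : Cplx := Cadd z (Copp w).
Definition Cmul (z w : Cplx) : Cplx :=
  (fst z * fst w - snd z * snd w, fst z * snd w + snd z * fst w).
Definition Cinv (z : Cplx) : Cplx :=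
  (fst z / (fst z ^ 2 + snd z ^ 2), - snd z / (fst z ^ 2 + snd z ^ 2)).
Definition Cexp (z : Cplx) : Cplx := (exp (fst z) * cos (snd z), exp (fst z) * sin (snd z)).
Definition Cmod (z : Cplx) : R := sqrt (fst z ^ 2 + snd z ^ 2).

Definition Csqrt_real (x : R) : Cplx :=
  if Rle_dec 0 x then (sqrt x, 0) else (0, sqrt (- x)).

Definition eigenvalue (M : Mat2) (z : Cplx) : Prop :=
  Csub (Cmul (Csub z (RtoC (e11 M))) (Csub z (RtoC (e22 M))))
       (RtoC (e12 M * e21 M)) = (0, 0).

Definition alpha_formula (a : R) (d : Cplx) : Cplx :=
  Copp (Cmul (RtoC (exp (- a)))
    (Cmul (Cadd (Cadd (Cadd (Cmul (RtoC (a ^ 2)) (Cexp d))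
                            (Cmul (RtoC (a ^ 2)) (Cexp (Copp d))))
                      (Cmul (RtoC 2) (Cmul d d)))
                (RtoC (- (2 * a ^ 2))))
          (Cinv (Cmul d d)))).

(* Main.v *)
From Coquelicot Require Import Coquelicot.
From Stdlib Require Import Reals Factorial Lra Lia Psatz.
Require Import Defs.
Open Scope R_scope.
Lemma pow_n_R (x : R) n : pow_n x n = x ^ n.
Proof. induction n. reflexivity. simpl. rewrite IHn. reflexivity. Qed.
Lemma pser_iff (a : nat -> R) (x:R) l : is_pseries a x l <-> is_series (fun k => x^k * a k) l.
Proof. unfold is_pseries; split; apply is_series_ext; intros n.
  - change (scal (pow_n x n) (a n)) with (pow_n x n * a n). rewrite pow_n_R. reflexivity.
  - symmetry. change (scal (pow_n x n) (a n)) with (pow_n x n * a n). rewrite pow_n_R. reflexivity. Qed.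

Lemma is_series_ext_R (a b : nat -> R) l : (forall n, a n = b n) -> is_series a l -> is_series b l.
Proof. apply is_series_ext. Qed.

Lemma exp_series (x : R) : is_series (fun k => x ^ k / INR (fact k)) (exp x).
Proof.
  generalize (is_exp_Reals x). unfold is_pseries. apply is_series_ext.
  intros n. rewrite pow_n_pow. unfold scal; simpl. unfold mult; simpl. unfold Rdiv. ring.
Qed.

Lemma ex_exp_abs (x : R) : ex_series (fun k => Rabs (x ^ k / INR (fact k))).
Proof.
  eexists. apply (is_series_ext (fun k => Rabs x ^ k / INR (fact k))).
  - intros n. rewrite Rabs_div. rewrite RPow_abs. rewrite (Rabs_right (INR _)). reflexivity.
    apply Rle_ge, pos_INR. apply INR_fact_neq_0.
  - apply exp_series.
Qed.

Definition csT (d : R) (m : nat) := d ^ m / INR (fact (2 * m)).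
Definition ssT (d : R) (m : nat) := d ^ m / INR (fact (2 * m + 1)).

Lemma fact_ge_INR (m k : nat) : (m <= k)%nat -> INR (fact m) <= INR (fact k).
Proof. intros H. apply le_INR, fact_le, H. Qed.

Lemma csT_abs d : ex_series (fun m => Rabs (csT d m)).
Proof.
  apply (@ex_series_le R_AbsRing R_CompleteNormedModule _ (fun m => Rabs d ^ m / INR (fact m))).
  - intros n. unfold norm; simpl. unfold abs; simpl. rewrite Rabs_Rabsolu.
    unfold csT. rewrite Rabs_div by apply INR_fact_neq_0. rewrite RPow_abs.
    rewrite (Rabs_right (INR _)) by (apply Rle_ge, pos_INR).
    unfold Rdiv. apply Rmult_le_compat_l. apply Rabs_pos.
    apply Rinv_le_contravar. apply INR_fact_lt_0. apply fact_ge_INR; lia.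
  - eexists. apply exp_series.
Qed.

Lemma ssT_abs d : ex_series (fun m => Rabs (ssT d m)).
Proof.
  apply (@ex_series_le R_AbsRing R_CompleteNormedModule _ (fun m => Rabs d ^ m / INR (fact m))).
  - intros n. unfold norm; simpl. unfold abs; simpl. rewrite Rabs_Rabsolu.
    unfold ssT. rewrite Rabs_div by apply INR_fact_neq_0. rewrite RPow_abs.
    rewrite (Rabs_right (INR _)) by (apply Rle_ge, pos_INR).
    unfold Rdiv. apply Rmult_le_compat_l. apply Rabs_pos.
    apply Rinv_le_contravar. apply INR_fact_lt_0. apply fact_ge_INR; lia.
  - eexists. apply exp_series.
Qed.

Definition Cs d := Series (csT d).
Definition Ss d := Series (ssT d).
Lemma Cs_correct d : is_series (csT d) (Cs d).
Proof. apply Series_correct, ex_series_Rabs, csT_abs. Qed.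
Lemma Ss_correct d : is_series (ssT d) (Ss d).
Proof. apply Series_correct, ex_series_Rabs, ssT_abs. Qed.

Lemma exp_Cs_Ss v : exp v = Cs (v^2) + v * Ss (v^2).
Proof.
  assert (H : is_pseries (fun n => / INR (fact n)) v (Cs (v^2) + v * Ss (v^2))).
  { apply is_pseries_odd_even.
    - apply pser_iff. apply (is_series_ext_R (csT (v^2))); [|apply (Cs_correct (v^2))].
      intros n. unfold csT. unfold Rdiv. ring.
    - apply pser_iff. apply (is_series_ext_R (ssT (v^2))); [|apply (Ss_correct (v^2))].
      intros n. unfold ssT. unfold Rdiv. ring. }
  apply pser_iff in H. apply is_series_unique in H.
  generalize (is_exp_Reals v). rewrite pser_iff. intros H2. apply is_series_unique in H2.
  rewrite <- H, <- H2. reflexivity.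
Qed.

Lemma cos_Cs w : cos w = Cs (- (w ^ 2)).
Proof.
  unfold cos. destruct (exist_cos (Rsqr w)) as [l Hl].
  unfold cos_in in Hl. apply is_series_Reals in Hl.
  symmetry. apply is_series_unique. eapply is_series_ext_R; [|apply Hl].
  intros n. unfold cos_n, csT, Rsqr. replace (- w^2) with (-1 * (w*w)) by ring.
  rewrite (Rpow_mult_distr (-1)). unfold Rdiv. ring.
Qed.

Lemma sin_Ss w : sin w = w * Ss (- (w ^ 2)).
Proof.
  unfold sin. destruct (exist_sin (Rsqr w)) as [l Hl].
  unfold sin_in in Hl. apply is_series_Reals in Hl.
  f_equal. symmetry. apply is_series_unique. eapply is_series_ext_R; [|apply Hl].
  intros n. unfold sin_n, ssT, Rsqr. replace (- w^2) with (-1 * (w*w)) by ring.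
  rewrite (Rpow_mult_distr (-1)). unfold Rdiv. ring.
Qed.

Lemma Ss_0 : Ss 0 = 1.
Proof.
  apply is_series_unique. apply is_series_Reals. intros eps Heps. exists 0%nat.
  intros n _. replace (sum_f_R0 (ssT 0) n) with 1.
  unfold Rdist. rewrite Rminus_diag, Rabs_R0. lra.
  induction n. unfold ssT; simpl. field.
  rewrite tech5, <- IHn. unfold ssT. simpl. lra.
Qed.

Lemma Cs_0 : Cs 0 = 1.
Proof. generalize (exp_Cs_Ss 0). rewrite exp_0. simpl. rewrite Rmult_0_l. lra. Qed.

Lemma Ss_mono d1 d2 : 0 <= d1 < d2 -> Ss d1 < Ss d2.
Proof.
  intros Hd.
  assert (H : is_series (fun m => ssT d2 m + (-1) * ssT d1 m) (Ss d2 + (-1) * Ss d1)).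
  { apply (@is_series_plus R_AbsRing R_NormedModule). apply Ss_correct.
    apply (@is_series_scal R_AbsRing R_NormedModule). apply Ss_correct. }
  apply is_series_Reals in H.
  assert (Hp : forall n, 0 <= ssT d2 n + -1 * ssT d1 n).
  { intros n. unfold ssT. assert (d1 ^ n <= d2 ^ n) by (apply pow_incr; lra).
    generalize (INR_fact_lt_0 (2*n+1)). intros. 
    assert (d1 ^ n / INR (fact (2*n+1)) <= d2 ^ n / INR (fact (2*n+1))).
    { unfold Rdiv. apply Rmult_le_compat_r. left; apply Rinv_0_lt_compat; lra. lra. }
    lra. }
  generalize (sum_incr _ 1 _ H Hp). simpl. unfold ssT. simpl. lra.
Qed.

Fixpoint hcs (d : R) (j : nat) : R * R :=
  match j with
  | O => (1, 0)
  | S k => (d * snd (hcs d k) / INR (S k), fst (hcs d k) / INR (S k))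
  end.

Lemma hcs_S d k : hcs d (S k) = (d * snd (hcs d k) / INR (S k), fst (hcs d k) / INR (S k)).
Proof. reflexivity. Qed.

Lemma hcs_parity d m : hcs d (2 * m) = (csT d m, 0) /\ hcs d (2 * m + 1) = (0, ssT d m).
Proof.
  induction m as [|m [IH1 IH2]].
  - simpl. unfold csT, ssT. simpl. split; f_equal; field.
  - replace (2 * S m)%nat with (S (2 * m + 1)) by lia.
    replace (S (2 * m + 1) + 1)%nat with (S (S (2 * m + 1))) by lia.
    assert (E1 : hcs d (S (2 * m + 1)) = (csT d (S m), 0)).
    { rewrite hcs_S, IH2. cbn [fst snd]. unfold csT, ssT.
      replace (2 * S m)%nat with (S (2 * m + 1)) by lia.
      rewrite fact_simpl, mult_INR. f_equal. simpl pow. field. split. apply INR_fact_neq_0.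
      apply not_0_INR. lia. unfold Rdiv. ring. }
    split. exact E1.
    rewrite hcs_S, E1. cbn [fst snd]. unfold csT, ssT.
    replace (2 * S m + 1)%nat with (S (S (2 * m + 1))) by lia.
    replace (2 * S m)%nat with (S (2 * m + 1)) by lia.
    rewrite (fact_simpl (S (2 * m + 1))), mult_INR. f_equal. unfold Rdiv. ring. field.
    split. apply INR_fact_neq_0. apply not_0_INR. lia.
Qed.

Definition hc d j := fst (hcs d j).
Definition hs d j := snd (hcs d j).

Lemma is_series_zero : is_series (fun _ : nat => 0) 0.
Proof.
  apply is_series_Reals. intros eps He. exists 0%nat. intros n _.
  replace (sum_f_R0 (fun _ => 0) n) with 0. unfold Rdist. rewrite Rminus_diag, Rabs_R0. lra.
  induction n. reflexivity. rewrite tech5, <- IHn. lra.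
Qed.

Lemma hc_series d : is_series (hc d) (Cs d).
Proof.
  assert (H : is_pseries (hc d) 1 (Cs d + 1 * 0)).
  { apply is_pseries_odd_even.
    - apply pser_iff. apply (is_series_ext_R (csT d)); [|apply Cs_correct].
      intros n. unfold hc. rewrite (proj1 (hcs_parity d n)). cbn [fst snd]. replace (1 ^ 2) with 1 by ring. rewrite pow1. ring.
    - apply pser_iff. apply (is_series_ext_R (fun _ => 0)); [|apply is_series_zero].
      intros n. unfold hc. rewrite (proj2 (hcs_parity d n)). cbn [fst snd]. ring. }
  rewrite pser_iff in H. replace (Cs d) with (Cs d + 1 * 0) by ring.
  refine (is_series_ext_R _ _ _ _ H). intros n. rewrite pow1. ring.
Qed.

Lemma hs_series d : is_series (hs d) (Ss d).
Proof.
  assert (H : is_pseries (hs d) 1 (0 + 1 * Ss d)).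
  { apply is_pseries_odd_even.
    - apply pser_iff. apply (is_series_ext_R (fun _ => 0)); [|apply is_series_zero].
      intros n. unfold hs. rewrite (proj1 (hcs_parity d n)). cbn [fst snd]. ring.
    - apply pser_iff. apply (is_series_ext_R (ssT d)); [|apply Ss_correct].
      intros n. unfold hs. rewrite (proj2 (hcs_parity d n)). cbn [fst snd]. replace (1 ^ 2) with 1 by ring. rewrite pow1. ring. }
  rewrite pser_iff in H. replace (Ss d) with (0 + 1 * Ss d) by ring.
  refine (is_series_ext_R _ _ _ _ H). intros n. rewrite pow1. ring.
Qed.

Lemma abs_csT d m : Rabs (csT d m) = csT (Rabs d) m.
Proof. unfold csT. rewrite Rabs_div by apply INR_fact_neq_0. rewrite <- RPow_abs.
  rewrite (Rabs_right (INR _)) by (apply Rle_ge, pos_INR). reflexivity. Qed.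
Lemma abs_ssT d m : Rabs (ssT d m) = ssT (Rabs d) m.
Proof. unfold ssT. rewrite Rabs_div by apply INR_fact_neq_0. rewrite <- RPow_abs.
  rewrite (Rabs_right (INR _)) by (apply Rle_ge, pos_INR). reflexivity. Qed.

Lemma abs_hcs d j : Rabs (hc d j) = hc (Rabs d) j /\ Rabs (hs d j) = hs (Rabs d) j.
Proof.
  unfold hc, hs. destruct (Nat.Even_or_Odd j) as [[m ->]|[m ->]].
  - rewrite !(proj1 (hcs_parity _ m)). simpl. rewrite abs_csT, Rabs_R0. auto.
  - rewrite !(proj2 (hcs_parity _ m)). simpl. rewrite abs_ssT, Rabs_R0. auto.
Qed.

Lemma hc_abs d : ex_series (fun j => Rabs (hc d j)).
Proof. exists (Cs (Rabs d)). eapply is_series_ext_R; [|apply hc_series].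
  intros n. symmetry. apply abs_hcs. Qed.
Lemma hs_abs d : ex_series (fun j => Rabs (hs d j)).
Proof. exists (Ss (Rabs d)). eapply is_series_ext_R; [|apply hs_series].
  intros n. symmetry. apply abs_hcs. Qed.

Definition gE (u : R) (k : nat) := u ^ k / INR (fact k).
Definition Kc u d n := sum_f_R0 (fun k => gE u k * hc d (n - k)) n.
Definition Lc u d n := sum_f_R0 (fun k => gE u k * hs d (n - k)) n.

Lemma Kc_series u d : is_series (Kc u d) (exp u * Cs d).
Proof. apply is_series_mult. apply exp_series. apply hc_series. apply ex_exp_abs. apply hc_abs. Qed.
Lemma Lc_series u d : is_series (Lc u d) (exp u * Ss d).
Proof. apply is_series_mult. apply exp_series. apply hs_series. apply ex_exp_abs. apply hs_abs. Qed.

Lemma sum_decomp (f : nat -> R) n : sum_f_R0 f (S n) = f 0%nat + sum_f_R0 (fun k => f (S k)) n.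
Proof.
  induction n. simpl. ring.
  rewrite tech5, IHn, tech5. ring.
Qed.

Lemma cauchy_rec (g h h' : nat -> R) (u : R) n :
  (forall k, INR (S k) * g (S k) = u * g k) ->
  (forall j, INR (S j) * h (S j) = h' j) ->
  INR (S n) * sum_f_R0 (fun k => g k * h (S n - k)%nat) (S n) =
  u * sum_f_R0 (fun k => g k * h (n - k)%nat) n + sum_f_R0 (fun k => g k * h' (n - k)%nat) n.
Proof.
  intros Hg Hh.
  rewrite scal_sum.
  rewrite (sum_eq _ (fun k => INR k * (g k * h (S n - k)%nat) + INR (S n - k) * (g k * h (S n - k)%nat))).
  2:{ intros i Hi. rewrite minus_INR by exact Hi. ring. }
  rewrite plus_sum. f_equal.
  - rewrite sum_decomp. simpl INR at 1. rewrite Rmult_0_l, Rplus_0_l.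
    rewrite scal_sum. apply sum_eq. intros i Hi.
    replace (S n - S i)%nat with (n - i)%nat by lia.
    transitivity ((INR (S i) * g (S i)) * h (n - i)%nat). ring. rewrite Hg. ring.
  - rewrite tech5. rewrite Nat.sub_diag. simpl INR at 2. rewrite Rmult_0_l, Rplus_0_r.
    apply sum_eq. intros i Hi.
    replace (S n - i)%nat with (S (n - i)) by lia.
    rewrite <- Hh. ring.
Qed.

Lemma gE_rec u k : INR (S k) * gE u (S k) = u * gE u k.
Proof. unfold gE. rewrite fact_simpl, mult_INR. simpl pow. field.
  split. apply INR_fact_neq_0. apply not_0_INR. lia. Qed.

Lemma hc_rec d j : INR (S j) * hc d (S j) = d * hs d j.
Proof. unfold hc, hs. rewrite hcs_S. cbn [fst]. field. apply not_0_INR. lia. Qed.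
Lemma hs_rec d j : INR (S j) * hs d (S j) = hc d j.
Proof. unfold hc, hs. rewrite hcs_S. cbn [snd]. field. apply not_0_INR. lia. Qed.

Lemma Kc_rec u d n : INR (S n) * Kc u d (S n) = u * Kc u d n + d * Lc u d n.
Proof.
  unfold Kc, Lc. rewrite (cauchy_rec (gE u) (hc d) (fun j => d * hs d j) u n).
  f_equal. rewrite scal_sum. apply sum_eq. intros; ring.
  apply gE_rec. apply hc_rec.
Qed.
Lemma Lc_rec u d n : INR (S n) * Lc u d (S n) = Kc u d n + u * Lc u d n.
Proof.
  unfold Kc, Lc. rewrite (cauchy_rec (gE u) (hs d) (hc d) u n). ring.
  apply gE_rec. apply hs_rec.
Qed.

Definition Bm u n11 n12 n21 := mk2 (u + n11) n12 n21 (u - n11).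

Lemma mpow_form u n11 n12 n21 n :
  let d := n11 ^ 2 + n12 * n21 in
  let X := INR (fact n) * Kc u d n in
  let Y := INR (fact n) * Lc u d n in
  mpow (Bm u n11 n12 n21) n = mk2 (X + Y * n11) (Y * n12) (Y * n21) (X - Y * n11).
Proof.
  intros d. induction n as [|n IH]; intros X Y.
  - unfold X, Y, Kc, Lc, hc, hs, gE. simpl. unfold mI. f_equal; field.
  - assert (HX : X = INR (fact n) * (u * Kc u d n + d * Lc u d n)).
    { unfold X. rewrite <- Kc_rec, fact_simpl, mult_INR. ring. }
    assert (HY : Y = INR (fact n) * (Kc u d n + u * Lc u d n)).
    { unfold Y. rewrite <- Lc_rec, fact_simpl, mult_INR. ring. }
    rewrite HX, HY. simpl mpow. rewrite IH. unfold Bm, mmul. cbn [e11 e12 e21 e22].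
    unfold d. f_equal; ring.
Qed.

Lemma lin_cv u d p q : Un_cv (fun n => sum_f_R0 (fun k => Kc u d k * p + Lc u d k * q) n)
   (exp u * Cs d * p + exp u * Ss d * q).
Proof.
  assert (H : is_series (fun k => Kc u d k * p + Lc u d k * q) (exp u * Cs d * p + exp u * Ss d * q)).
  { apply (@is_series_plus R_AbsRing R_NormedModule (fun k => Kc u d k * p) (fun k => Lc u d k * q)).
    apply is_series_scal_r, Kc_series. apply is_series_scal_r, Lc_series. }
  apply is_series_Reals in H. exact H.
Qed.

Lemma Un_cv_ext (f g : nat -> R) l : (forall n, f n = g n) -> Un_cv f l -> Un_cv g l.
Proof. intros H Hf eps He. destruct (Hf eps He) as [N HN]. exists N. intros n Hn. rewrite <- H. auto. Qed.

Lemma entry_lim u n11 n12 n21 (f : Mat2 -> R) p q l :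
  let d := n11 ^ 2 + n12 * n21 in
  (forall k, f (mpow (Bm u n11 n12 n21) k) = INR (fact k) * (Kc u d k * p + Lc u d k * q)) ->
  Un_cv (exp_partial f (Bm u n11 n12 n21)) l ->
  l = exp u * Cs d * p + exp u * Ss d * q.
Proof.
  intros d Hf Hl. eapply UL_sequence. apply Hl.
  eapply Un_cv_ext; [|apply (lin_cv u d p q)].
  intros n. unfold exp_partial. apply sum_eq. intros i _. rewrite Hf. field. apply INR_fact_neq_0.
Qed.

Lemma mexp_form u n11 n12 n21 E :
  is_mexp (Bm u n11 n12 n21) E ->
  let d := n11 ^ 2 + n12 * n21 in
  let X := exp u * Cs d in let Y := exp u * Ss d in
  E = mk2 (X + Y * n11) (Y * n12) (Y * n21) (X - Y * n11).
Proof.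
  intros [H1 [H2 [H3 H4]]] d X Y.
  destruct E as [a11 a12 a21 a22]; cbn [e11 e12 e21 e22] in *.
  rewrite (entry_lim u n11 n12 n21 e11 1 n11 a11), (entry_lim u n11 n12 n21 e12 0 n12 a12),
    (entry_lim u n11 n12 n21 e21 0 n21 a21), (entry_lim u n11 n12 n21 e22 1 (- n11) a22); auto;
  try (intros k; rewrite mpow_form; cbn [e11 e12 e21 e22]; ring).
  unfold X, Y, d. f_equal; ring.
Qed.

Lemma exp_neg_Cs_Ss v : exp (- v) = Cs (v^2) - v * Ss (v^2).
Proof. rewrite exp_Cs_Ss. replace ((-v)^2) with (v^2) by ring. ring. Qed.

Lemma CS_id dl : Cs dl ^ 2 - dl * Ss dl ^ 2 = 1.
Proof.
  destruct (Rle_dec 0 dl) as [H|H].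
  - set (v := sqrt dl). assert (Hv : v ^ 2 = dl) by (unfold v; simpl; rewrite Rmult_1_r; apply sqrt_sqrt, H).
    generalize (exp_plus v (- v)). rewrite Rplus_opp_r, exp_0, exp_Cs_Ss, exp_neg_Cs_Ss, Hv.
    intros E. rewrite <- Hv at 2. nra.
  - set (w := sqrt (- dl)). assert (Hw : w ^ 2 = - dl) by (unfold w; simpl; rewrite Rmult_1_r; apply sqrt_sqrt; lra).
    generalize (sin2_cos2 w). intros E. unfold Rsqr in E. rewrite cos_Cs, sin_Ss, Hw, Ropp_involutive in E.
    nra.
Qed.

Lemma abs_sin_le w : 0 < w -> Rabs (sin w) <= w.
Proof.
  intros Hw. generalize (sin_lt_x w Hw). intros H1. apply Rabs_le. split; [|lra].
  destruct (Rle_dec 1 w). generalize (SIN_bound w). lra.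
  assert (0 <= sin w). apply sin_ge_0; [lra|]. generalize PI2_1. lra. lra.
Qed.

Lemma key_bound a dl : 0 < a -> dl < a ^ 2 / 4 -> a ^ 2 * Ss dl ^ 2 < exp a + exp (- a) - 2.
Proof.
  intros Ha Hd. set (A := a / 2).
  assert (HA : exp a + exp (- a) - 2 = (2 * A * Ss (A^2)) ^ 2).
  { assert (E1 : exp a = exp A * exp A) by (rewrite <- exp_plus; unfold A; f_equal; field).
    assert (E2 : exp (- a) = exp (-A) * exp (-A)) by (rewrite <- exp_plus; unfold A; f_equal; field).
    assert (E3 : exp A * exp (- A) = 1) by (rewrite <- exp_plus, Rplus_opp_r; apply exp_0).
    generalize (exp_Cs_Ss A) (exp_neg_Cs_Ss A). intros F1 F2.
    assert (exp A - exp (- A) = 2 * A * Ss (A^2)) by lra.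
    rewrite E1, E2. rewrite <- H. nra. }
  rewrite HA.
  assert (HSA : 1 < Ss (A ^ 2)). { rewrite <- Ss_0. apply Ss_mono. split. lra. unfold A. nra. }
  assert (HS : Ss dl ^ 2 < Ss (A ^ 2) ^ 2).
  { destruct (Rle_dec 0 dl) as [H|H].
    - assert (1 <= Ss dl). { destruct H as [H|H]. rewrite <- Ss_0. left. apply Ss_mono. lra.
        subst. rewrite Ss_0. lra. }
      assert (Ss dl < Ss (A^2)). apply Ss_mono. split. lra. unfold A. replace ((a/2)^2) with (a^2/4) by field. lra.
      nra.
    - set (w := sqrt (- dl)). assert (Hw : w ^ 2 = - dl) by (unfold w; simpl; rewrite Rmult_1_r; apply sqrt_sqrt; lra).
      assert (Hwp : 0 < w) by (unfold w; apply sqrt_lt_R0; lra).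
      generalize (sin_Ss w) (abs_sin_le w Hwp). rewrite Hw, Ropp_involutive. intros E F.
      rewrite E in F. rewrite Rabs_mult, (Rabs_right w) in F by lra.
      assert (Rabs (Ss dl) <= 1). { apply (Rmult_le_reg_l w). lra. lra. }
      assert (Ss dl ^ 2 <= 1). { rewrite <- (pow2_abs (Ss dl)). assert (0 <= Rabs (Ss dl)) by apply Rabs_pos. nra. }
      nra. }
  replace ((2 * A * Ss (A ^ 2)) ^ 2) with (a ^ 2 * Ss (A^2) ^ 2) by (unfold A; field).
  apply Rmult_lt_compat_l. nra. exact HS.
Qed.

Lemma quad_root T D x : 0 < T -> 0 < D < 1 -> T < 1 + D -> x ^ 2 - T * x + D = 0 -> x ^ 2 < 1.
Proof.
  intros HT HD HTD Hx.
  destruct (Rle_dec 1 x). { assert ((x-1)*(x+1-T) >= 0) by (apply Rle_ge, Rmult_le_pos; lra). nra. }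
  destruct (Rle_dec x (-1)). { assert (- T * x >= 0) by nra. nra. }
  nra.
Qed.

Theorem mainTheorem2 (a b c : R) (ha : 0 < a) (hb : 0 < b) (hc : 0 < c)
  (E1 E2 : Mat2)
  (hE1 : is_mexp (mk2 (- a) (- b) c 0) E1)
  (hE2 : is_mexp (mk2 (- a) b (- c) 0) E2)
  (alpha beta : R)
  (hchar : forall l : R, charpoly (mmul E2 E1) l = l ^ 2 + alpha * l + beta) :
  beta = exp (- (2 * a)) /\
  (Csqrt_real (a ^ 2 - 4 * b * c) <> (0, 0) ->
     RtoC alpha = alpha_formula a (Csqrt_real (a ^ 2 - 4 * b * c))) /\
  (forall z : Cplx, eigenvalue (mmul E2 E1) z -> Cmod z < 1).
Proof.
  assert (HB1 : mk2 (-a) (-b) c 0 = Bm (-a/2) (-a/2) (-b) c) by (unfold Bm; f_equal; field).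
  assert (HB2 : mk2 (-a) b (-c) 0 = Bm (-a/2) (-a/2) b (-c)) by (unfold Bm; f_equal; field).
  rewrite HB1 in hE1. rewrite HB2 in hE2.
  apply mexp_form in hE1. apply mexp_form in hE2. cbv zeta in hE1, hE2.
  set (dl := a ^ 2 / 4 - b * c) in *.
  replace ((- a / 2) ^ 2 + - b * c) with dl in hE1 by (unfold dl; field).
  replace ((- a / 2) ^ 2 + b * - c) with dl in hE2 by (unfold dl; field).
  set (e := exp (- a / 2)) in *. set (Cv := Cs dl) in *. set (Sv := Ss dl) in *.
  assert (He2 : e ^ 2 = exp (- a)) by (unfold e; simpl; rewrite Rmult_1_r, <- exp_plus; f_equal; field).
  assert (He4 : e ^ 4 = exp (- (2 * a))).
  { replace (e ^ 4) with (e^2 * e^2) by ring. rewrite He2, <- exp_plus. f_equal; ring. }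
  assert (HK1 : Cv ^ 2 - dl * Sv ^ 2 = 1) by apply CS_id.
  set (M := mmul E2 E1) in *.
  set (T := e11 M + e22 M). set (D := det2 M).
  assert (HD : D = exp (- (2 * a))).
  { rewrite <- He4. unfold D, M, det2, mmul. rewrite hE1, hE2. cbn [e11 e12 e21 e22].
    transitivity (e ^ 4 * (Cv ^ 2 - dl * Sv ^ 2) ^ 2). unfold dl; field. rewrite HK1. ring. }
  assert (HT : T = exp (- a) * (2 + a ^ 2 * Sv ^ 2)).
  { rewrite <- He2. unfold T, M, mmul. rewrite hE1, hE2. cbn [e11 e12 e21 e22].
    transitivity (e ^ 2 * (2 * (Cv ^ 2 - dl * Sv ^ 2) + a ^ 2 * Sv ^ 2)). unfold dl; field. rewrite HK1. ring. }
  assert (Hbeta : beta = D).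
  { generalize (hchar 0). unfold charpoly, D, det2. cbn [e11 e12 e21 e22]. intros H. nra. }
  assert (Halpha : alpha = - T).
  { generalize (hchar 1) (hchar 0). unfold charpoly, T, det2. cbn [e11 e12 e21 e22]. intros H H0. nra. }
  split; [|split].
  - rewrite Hbeta, HD. reflexivity.
  - intros Hne. unfold Csqrt_real in *.
    destruct (Rle_dec 0 (a^2 - 4*b*c)) as [H0|H0].
    + assert (Hdl : 0 <= dl) by (unfold dl; lra).
      set (v := sqrt dl).
      assert (Hsq : sqrt (a^2 - 4*b*c) = 2 * v).
      { replace (a^2-4*b*c) with ((2*2)*dl) by (unfold dl; field).
        rewrite sqrt_mult by lra. rewrite sqrt_square by lra. reflexivity. }
      rewrite Hsq in *.
      assert (Hv : v <> 0). { intro Hv0. apply Hne. rewrite Hv0. f_equal; ring. }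
      assert (Hv2 : v^2 = dl) by (unfold v; simpl; rewrite Rmult_1_r; apply sqrt_sqrt, Hdl).
      generalize (exp_Cs_Ss v) (exp_neg_Cs_Ss v). rewrite Hv2.
      change (Cs dl) with Cv. change (Ss dl) with Sv. intros F1 F2.
      assert (HSv : Sv = (exp v - exp (- v)) / (2 * v)) by (rewrite F1, F2; field; exact Hv).
      rewrite Halpha, HT, HSv. unfold alpha_formula, RtoC, Cmul, Cadd, Cinv, Cexp, Copp. cbn [fst snd].
      rewrite ?Ropp_0, ?cos_0, ?sin_0.
      assert (X1 : exp (2 * v) = exp v * exp v) by (rewrite <- exp_plus; f_equal; ring).
      assert (X2 : exp (- (2 * v)) = exp (- v) * exp (- v)) by (rewrite <- exp_plus; f_equal; ring).
      rewrite X1, X2, (exp_Ropp v).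
      assert (exp v <> 0) by (apply Rgt_not_eq, exp_pos).
      f_equal; field; auto.
    + assert (Hdl : dl < 0) by (unfold dl; lra).
      set (w := sqrt (- dl)).
      assert (Hsq : sqrt (- (a^2 - 4*b*c)) = 2 * w).
      { replace (- (a^2-4*b*c)) with ((2*2)*(-dl)) by (unfold dl; field).
        rewrite sqrt_mult by lra. rewrite sqrt_square by lra. reflexivity. }
      rewrite Hsq in *.
      assert (Hw : 0 < w) by (unfold w; apply sqrt_lt_R0; lra).
      assert (Hw2 : w^2 = - dl) by (unfold w; simpl; rewrite Rmult_1_r; apply sqrt_sqrt; lra).
      generalize (sin_Ss w). rewrite Hw2, Ropp_involutive. change (Ss dl) with Sv. intros F1.
      assert (HSv : Sv = sin w / w) by (rewrite F1; field; lra).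
      rewrite Halpha, HT, HSv. unfold alpha_formula, RtoC, Cmul, Cadd, Cinv, Cexp, Copp. cbn [fst snd].
      rewrite ?Ropp_0, ?exp_0, ?cos_neg, ?sin_neg, ?cos_2a_sin.
      f_equal; field; lra.
  - assert (HTe : e11 M + e22 M = T) by reflexivity.
    assert (HDe : e11 M * e22 M - e12 M * e21 M = D) by reflexivity.
    clearbody T D M.
    intros [x y] Hz. unfold eigenvalue, Csub, Cadd, Copp, Cmul, RtoC in Hz. cbn [fst snd] in Hz.
    injection Hz as Hre Him.
    assert (Hq : 0 < exp (- a)) by apply exp_pos.
    assert (HTp : 0 < T) by (rewrite HT; apply Rmult_lt_0_compat; [exact Hq | nra]).
    assert (Hqq : exp (- (2 * a)) = exp (- a) * exp (- a)) by (rewrite <- exp_plus; f_equal; ring).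
    assert (Hq1 : exp (- a) < 1) by (rewrite <- exp_0; apply exp_increasing; lra).
    assert (HD01 : 0 < D < 1) by (rewrite HD, Hqq; split; nra).
    assert (HTD : T < 1 + D).
    { rewrite HT, HD, Hqq.
      assert (HKB : a ^ 2 * Sv ^ 2 < exp a + exp (- a) - 2).
      { apply key_bound. lra. unfold dl. nra. }
      assert (HE : exp a * exp (- a) = 1) by (rewrite <- exp_plus, Rplus_opp_r; apply exp_0).
      nra. }
    unfold Cmod. cbn [fst snd]. rewrite <- sqrt_1. apply sqrt_lt_1_alt.
    split. nra.
    destruct (Req_dec y 0) as [Hy|Hy].
    + subst y. assert (x ^ 2 < 1). { apply (quad_root T D x); auto. rewrite <- HTe, <- HDe. nra. }
      nra.
    + assert (Hx : 2 * x = T). { rewrite <- HTe. apply (Rmult_eq_reg_l y); [|exact Hy]. nra. }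
      rewrite <- HTe in Hx. nra.
Qed.
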